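(* Let $p>1$, $\alpha\in\mathbb{R}$, and for $\bar w\in\mathbb{R}$, $s$ large, define $$N(\bar w,s)=h(s)|\bar w+1|^{p-1}(\bar w+1)\frac{\ln^\alpha(\psi_1^2(\bar w+1)^2+2)}{\ln^\alpha(\psi_1^2+2)}-h(s)(\bar w+1)-\bar w,$$ with $\psi_1=\psi_1(s)$. Then $$N(\bar w,s)=\frac{p\bar w^2}{2}+O\!\left(\frac{|\bar w|\ln s}{s^2}\right)+O\!\left(\frac{|\bar w|^2}{s}\right)+O(|\bar w|^3)\quad\text{as }(\bar w,s)\to(0,+\infty).$$
   Context: For $T>0$ let $\psi$ be the unique positive solution of $\psi'=\psi^p\ln^\alpha(\psi^2+2)$ with $\psi(t)\to+\infty$ as $t\to T$; set $\psi_1(s)=\psi(T-e^{-s})$ and $h(s)=e^{-s}\psi_1^{p-1}(s)\ln^\alpha(\psi_1^2(s)+2)$. *)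

(* Defs.v *)
From Stdlib Require Import Reals.
From Coquelicot Require Import Coquelicot.
Open Scope R_scope.

Definition rpow (x y : R) : R := Rpower x y.

Definition lnpow (alpha x : R) : R := rpow (ln (x ^ 2 + 2)) alpha.

Definition is_blowup_sol (p alpha T : R) (psi : R -> R) : Prop :=
  (forall t, t < T -> 0 < psi t) /\
  (forall t, t < T -> is_derive psi t (rpow (psi t) p * lnpow alpha (psi t))) /\
  filterlim psi (at_left T) (Rbar_locally p_infty).

Definition psi1 (psi : R -> R) (T s : R) : R := psi (T - exp (- s)).

Definition hfun (p alpha T : R) (psi : R -> R) (s : R) : R :=
  exp (- s) * rpow (psi1 psi T s) (p - 1) * lnpow alpha (psi1 psi T s).

Definition Nfun (p alpha T : R) (psi : R -> R) (w s : R) : R :=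
  let P := psi1 psi T s in
  let h := hfun p alpha T psi s in
  h * rpow (Rabs (w + 1)) (p - 1) * (w + 1)
    * (rpow (ln (P ^ 2 * (w + 1) ^ 2 + 2)) alpha / lnpow alpha P)
  - h * (w + 1) - w.

(* Main.v *)
Require Import Defs.
From Stdlib Require Import Reals Lra Psatz.
From Coquelicot Require Import Coquelicot.
Open Scope R_scope.


Lemma derive_cont f df x : is_derive f x df -> continuity_pt f x.
Proof.
  intros H. apply continuity_pt_filterlim.
  apply (ex_derive_continuous (K:=R_AbsRing) (V:=R_NormedModule) f x).
  exists df; exact H.
Qed.

Lemma mvt_bound (f f' : R -> R) (B : R) (k : nat) :
  0 <= B -> f 0 = 0 ->
  (forall c, Rabs c <= 1/2 -> is_derive f c (f' c)) ->
  (forall c, Rabs c <= 1/2 -> Rabs (f' c) <= B * Rabs c ^ k) ->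
  forall y, Rabs y <= 1/2 -> Rabs (f y) <= B * Rabs y ^ (S k).
Proof.
  intros HB H0 Hd Hb y Hy.
  destruct (MVT_gen f 0 y f') as [c [Hc Heq]].
  - intros x Hx. apply Hd.
    unfold Rmin, Rmax in Hx; destruct (Rle_dec 0 y);
    apply Rabs_le; split_Rabs; lra.
  - intros x Hx. apply derive_cont with (f' x). apply Hd.
    unfold Rmin, Rmax in Hx; destruct (Rle_dec 0 y);
    apply Rabs_le; split_Rabs; lra.
  - rewrite H0, !Rminus_0_r in Heq.
    assert (Hcy : Rabs c <= Rabs y).
    { unfold Rmin, Rmax in Hc; destruct (Rle_dec 0 y); split_Rabs; lra. }
    assert (Hc2 : Rabs c <= 1/2) by lra.
    rewrite Heq, Rabs_mult. simpl.
    apply Rle_trans with (B * Rabs c ^ k * Rabs y).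
    + apply Rmult_le_compat_r. apply Rabs_pos. apply Hb; auto.
    + assert (Hp : Rabs c ^ k <= Rabs y ^ k) by (apply pow_incr; split; auto; apply Rabs_pos).
      replace (B * (Rabs y * Rabs y ^ k)) with (B * Rabs y ^ k * Rabs y) by ring.
      apply Rmult_le_compat_r; [apply Rabs_pos|].
      apply Rmult_le_compat_l; lra.
Qed.

Definition pw (g y : R) := exp (g * ln (1 + y)).

Lemma pw_derive g y : -1 < y -> is_derive (pw g) y (g * pw (g - 1) y).
Proof.
  intros Hy. unfold pw. auto_derive.
  - lra.
  - replace ((g-1) * ln (1+y)) with (g * ln (1+y) + - ln (1+y)) by ring.
    rewrite exp_plus, exp_Ropp, exp_ln by lra. field. lra.
Qed.

Lemma pw_0 g : pw g 0 = 1.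
Proof. unfold pw. rewrite Rplus_0_r, ln_1, Rmult_0_r, exp_0. reflexivity. Qed.

Lemma ln_small y : Rabs y <= 1/2 -> Rabs (ln (1 + y)) <= 1.
Proof.
  intros Hy.
  assert (H1 : ln (1/2) <= ln (1+y)) by (apply ln_le; split_Rabs; lra).
  assert (H2 : ln (1+y) <= ln 2) by (apply ln_le; split_Rabs; lra).
  assert (Hl2 : ln 2 < 1).
  { rewrite <- ln_exp with 1. apply ln_increasing; try lra.
    pose proof (exp_ineq1 1). lra. }
  assert (ln (1/2) = - ln 2).
  { unfold Rdiv. rewrite Rmult_1_l, ln_Rinv; lra. }
  apply Rabs_le; lra.
Qed.

Lemma exp_le_mono x y : x <= y -> exp x <= exp y.
Proof.
  intros H. destruct (Rle_lt_or_eq_dec _ _ H) as [Hl|He].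
  left; apply exp_increasing; auto. rewrite He; lra.
Qed.

Lemma pw_bound0 g : exists A, 0 <= A /\ forall y, Rabs y <= 1/2 -> Rabs (pw g y) <= A.
Proof.
  exists (exp (Rabs g)). split. left; apply exp_pos.
  intros y Hy. unfold pw. rewrite Rabs_pos_eq by (left; apply exp_pos).
  apply exp_le_mono.
  pose proof (ln_small y Hy).
  apply Rle_trans with (Rabs (g * ln (1+y))). apply Rle_abs.
  rewrite Rabs_mult. rewrite <- (Rmult_1_r (Rabs g)) at 2.
  apply Rmult_le_compat_l; auto. apply Rabs_pos.
Qed.

Lemma is_derive_pw_sub g (Q : R -> R) dQ c : -1 < c -> is_derive Q c dQ ->
  is_derive (fun y => pw g y - Q y) c (g * pw (g-1) c - dQ).
Proof.
  intros Hc HQ. apply (is_derive_minus (pw g) Q c); auto using pw_derive.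
Qed.

Lemma pw_T1 g : exists A, 0 <= A /\ forall y, Rabs y <= 1/2 -> Rabs (pw g y - 1) <= A * Rabs y.
Proof.
  destruct (pw_bound0 (g-1)) as [A0 [HA0 HB0]].
  exists (Rabs g * A0). split. apply Rmult_le_pos; auto; apply Rabs_pos.
  intros y Hy.
  pose proof (mvt_bound (fun y => pw g y - (fun _ => 1) y) (fun c => g * pw (g-1) c - 0)
     (Rabs g * A0) 0) as M.
  simpl in M. replace (Rabs g * A0 * Rabs y) with (Rabs g * A0 * (Rabs y * 1)) by ring.
  apply M; auto.
  - apply Rmult_le_pos; auto; apply Rabs_pos.
  - rewrite pw_0; ring.
  - intros c Hc. apply is_derive_pw_sub. split_Rabs; lra. auto_derive; auto.
  - intros c Hc. rewrite Rminus_0_r, Rmult_1_r, Rabs_mult.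
    apply Rmult_le_compat_l. apply Rabs_pos. auto.
Qed.

Lemma pw_T2 g : exists A, 0 <= A /\ forall y, Rabs y <= 1/2 ->
  Rabs (pw g y - 1 - g * y) <= A * Rabs y ^ 2.
Proof.
  destruct (pw_T1 (g-1)) as [A0 [HA0 HB0]].
  exists (Rabs g * A0). split. apply Rmult_le_pos; auto; apply Rabs_pos.
  intros y Hy.
  pose proof (mvt_bound (fun y => pw g y - (fun y => 1 + g * y) y) (fun c => g * pw (g-1) c - g)
     (Rabs g * A0) 1) as M.
  simpl in M. replace (pw g y - 1 - g * y) with (pw g y - (1 + g*y)) by ring.
  replace (Rabs y ^ 2) with (Rabs y * (Rabs y * 1)) by ring. apply M; auto.
  - apply Rmult_le_pos; auto; apply Rabs_pos.
  - rewrite pw_0; ring.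
  - intros c Hc. apply is_derive_pw_sub. split_Rabs; lra. auto_derive; auto; ring.
  - intros c Hc. replace (g * pw (g - 1) c - g) with (g * (pw (g-1) c - 1)) by ring.
    rewrite Rmult_1_r, Rabs_mult, Rmult_assoc.
    apply Rmult_le_compat_l. apply Rabs_pos. auto.
Qed.

Lemma pw_T3 g : exists A, 0 <= A /\ forall y, Rabs y <= 1/2 ->
  Rabs (pw g y - 1 - g * y - g * (g - 1) / 2 * y ^ 2) <= A * Rabs y ^ 3.
Proof.
  destruct (pw_T2 (g-1)) as [A0 [HA0 HB0]].
  exists (Rabs g * A0). split. apply Rmult_le_pos; auto; apply Rabs_pos.
  intros y Hy.
  pose proof (mvt_bound (fun y => pw g y - (fun y => 1 + g * y + g * (g - 1) / 2 * y ^ 2) y)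
     (fun c => g * pw (g-1) c - (g + g * (g-1) * c))
     (Rabs g * A0) 2) as M.
  simpl in M.
  replace (pw g y - 1 - g * y - g * (g - 1) / 2 * y ^ 2)
    with (pw g y - (1 + g * y + g * (g - 1) / 2 * y ^ 2)) by ring.
  replace (Rabs y ^ 3) with (Rabs y * (Rabs y * (Rabs y * 1))) by ring. apply M; auto.
  - apply Rmult_le_pos; auto; apply Rabs_pos.
  - rewrite pw_0; ring.
  - intros c Hc. apply is_derive_pw_sub. split_Rabs; lra. auto_derive; auto; field.
  - intros c Hc.
    replace (g * pw (g - 1) c - (g + g * (g - 1) * c)) with (g * (pw (g-1) c - 1 - (g-1) * c)) by ring.
    replace (Rabs c * (Rabs c * 1)) with (Rabs c ^ 2) by ring.
    rewrite Rabs_mult, Rmult_assoc.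
    apply Rmult_le_compat_l. apply Rabs_pos. auto.
Qed.

Lemma ln_T1 : forall y, Rabs y <= 1/2 -> Rabs (ln (1 + y)) <= 2 * Rabs y.
Proof.
  intros y Hy.
  pose proof (mvt_bound (fun y => ln (1 + y)) (fun c => / (1 + c)) 2 0) as M.
  simpl in M. replace (2 * Rabs y) with (2 * (Rabs y * 1)) by ring.
  apply M; auto; try lra.
  - rewrite Rplus_0_r, ln_1; auto.
  - intros c Hc. auto_derive. split_Rabs; lra. field. split_Rabs; lra.
  - intros c Hc. rewrite Rmult_1_r. rewrite Rabs_Rinv by (split_Rabs; lra).
    rewrite Rabs_pos_eq by (split_Rabs; lra).
    replace 2 with (/ (1/2)) by field. apply Rinv_le_contravar; split_Rabs; lra.
Qed.

Lemma ln_T2 : forall y, Rabs y <= 1/2 -> Rabs (ln (1 + y) - y) <= 2 * Rabs y ^ 2.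
Proof.
  intros y Hy.
  pose proof (mvt_bound (fun y => ln (1 + y) - y) (fun c => / (1 + c) - 1) 2 1) as M.
  simpl in M. replace (Rabs y ^ 2) with (Rabs y * (Rabs y * 1)) by ring. apply M; auto; try lra.
  - rewrite Rplus_0_r, ln_1; ring.
  - intros c Hc. auto_derive. split_Rabs; lra. field. split_Rabs; lra.
  - intros c Hc. rewrite Rmult_1_r.
    replace (/ (1 + c) - 1) with (- c / (1 + c)) by (field; split_Rabs; lra).
    unfold Rdiv. rewrite Rabs_mult, Rabs_Ropp, Rabs_Rinv by (split_Rabs; lra).
    rewrite (Rabs_pos_eq (1 + c)) by (split_Rabs; lra).
    rewrite Rmult_comm. apply Rmult_le_compat_r. apply Rabs_pos.
    replace 2 with (/ (1/2)) by field. apply Rinv_le_contravar; split_Rabs; lra.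
Qed.


Definition Phi (p a k x : R) :=
  exp ((1-p)*ln x - a*ln (ln (x^2+2))) * (1 + k/(ln (x^2+2))^2) /
   (p - 1 + 2*a*(x^2/(x^2+2))/ln (x^2+2)).

Definition Dk (p a k x : R) :=
  let Y := x^2+2 in let l := ln Y in let th := x^2/Y in
  let q := p-1+2*a*th/l in
  let g := 2*a*(4*x^2/(Y^2*l) - 2*x^4/(Y^2*l^2)) in
  let M := 1 + k/l^2 in
  -M - M*g/q^2 - 4*k*th/(q*l^3).

Definition Kc (p a : R) := 96 * Rabs a / (p-1)^2 + 1.
Definition l0 (p a : R) := 4 * Rabs a / (p-1) + 2 * Kc p a + 1.

Lemma ln_le_self z : 0 < z -> ln z <= z - 1.
Proof.
  intros Hz. pose proof (exp_ineq1_le (ln z)). rewrite exp_ln in H; lra.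
Qed.

Lemma Kc_pos p a : 1 < p -> 1 <= Kc p a.
Proof.
  intros Hp. unfold Kc. assert (0 <= 96 * Rabs a / (p-1)^2).
  { apply Rmult_le_pos. pose proof (Rabs_pos a); lra. left; apply Rinv_0_lt_compat; nra. }
  lra.
Qed.


Lemma basic_bounds (p a : R) (Hp : 1 < p) x : 1 <= x -> l0 p a <= ln (x^2+2) ->
  let l := ln (x^2+2) in let q := p-1+2*a*(x^2/(x^2+2))/l in
  1 <= l /\ l <= x^2+2 /\ Kc p a / l^2 <= 1/2 /\ (p-1)/2 <= q /\ q <= 3*(p-1)/2
  /\ Rabs (2*a*(x^2/(x^2+2))/l) <= 2 * Rabs a / l.
Proof.
  intros Hx Hl l q.
  pose proof (Kc_pos p a Hp) as HK.
  assert (Ha : 0 <= Rabs a) by apply Rabs_pos.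
  assert (H4 : 0 <= 4 * Rabs a / (p-1)).
  { apply Rmult_le_pos. lra. left; apply Rinv_0_lt_compat; lra. }
  unfold l0 in Hl. fold l in Hl.
  assert (H1 : 1 <= l) by lra.
  assert (H2 : l <= x^2+2) by (unfold l; pose proof (ln_le_self (x^2+2)); nra).
  assert (Hth : 0 <= x^2/(x^2+2) <= 1).
  { split. apply Rmult_le_pos. nra. left; apply Rinv_0_lt_compat; nra.
    apply Rmult_le_reg_r with (x^2+2). nra. unfold Rdiv.
    rewrite Rmult_assoc, Rinv_l by nra. nra. }
  assert (Hb : Rabs (2*a*(x^2/(x^2+2))/l) <= 2 * Rabs a / l).
  { assert (Hil : 0 < / l) by (apply Rinv_0_lt_compat; lra).
    unfold Rdiv in *. set (t := x^2 * / (x^2+2)) in *. set (il := / l) in *.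
    apply Rabs_le. destruct (Rle_dec 0 a).
    - rewrite Rabs_pos_eq by lra. split. assert (0 <= a * t) by nra. assert (0 <= a * t * il) by nra. nra.
      assert (a * t * il <= a * il) by (apply Rmult_le_compat_r; [lra| nra]). nra.
    - rewrite Rabs_left by lra. split.
      assert (a * il <= a * t * il) by (apply Rmult_le_compat_r; [lra| nra]). nra.
      assert (a * t * il <= 0). { assert (a*t <= 0) by nra. nra. } nra. }
  assert (Hb2 : 2 * Rabs a / l <= (p-1)/2).
  { apply Rmult_le_reg_r with l. lra. unfold Rdiv. rewrite Rmult_assoc, Rinv_l by lra.
    assert (4 * Rabs a <= (p-1) * l).
    { assert (4 * Rabs a / (p-1) * (p-1) = 4 * Rabs a) by (field; lra). nra. }
    lra. }
  repeat split; auto.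
  - apply Rmult_le_reg_r with (l^2). nra. unfold Rdiv. rewrite Rmult_assoc, Rinv_l by nra. nra.
  - unfold q. apply Rabs_le_between in Hb; lra.
  - unfold q. split_Rabs; lra.
Qed.

Lemma Dk_bounds (p a : R) (Hp : 1 < p) x : 1 <= x -> l0 p a <= ln (x^2+2) ->
  Dk p a (Kc p a) x <= -1 /\ -1 <= Dk p a (- Kc p a) x.
Proof.
  intros Hx Hl.
  destruct (basic_bounds p a Hp x Hx Hl) as (H1 & H2 & HK2 & Hq1 & Hq2 & Hb).
  unfold Dk. cbv zeta.
  set (Y := x^2+2) in *. set (l := ln Y) in *.
  set (th := x^2/Y) in *. set (q := p - 1 + 2 * a * th / l) in *.
  set (K := Kc p a) in *.
  assert (HY : 0 < Y) by (unfold Y; nra).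
  assert (Hth : 0 <= th <= 1).
  { split. unfold th. apply Rmult_le_pos. nra. left; apply Rinv_0_lt_compat; nra.
    apply Rmult_le_reg_r with Y. nra. unfold th, Rdiv.
    rewrite Rmult_assoc, Rinv_l by nra. unfold Y; nra. }
  assert (HK : 1 <= K) by (apply Kc_pos; auto).
  assert (Hga : Rabs (2 * a * (4 * x ^ 2 / (Y ^ 2 * l) - 2 * x ^ 4 / (Y ^ 2 * l ^ 2)))
                <= 12 * Rabs a / l^2).
  { replace (4 * x ^ 2 / (Y ^ 2 * l) - 2 * x ^ 4 / (Y ^ 2 * l ^ 2))
       with (4 * th * (/Y) * (/l) - 2 * th^2 / l^2) by (unfold th; field; lra).
    assert (Hy : 0 < /Y <= /l).
    { split. apply Rinv_0_lt_compat; lra. apply Rinv_le_contravar; lra. }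
    assert (Hil : 0 < /l) by (apply Rinv_0_lt_compat; lra).
    assert (E1 : 0 <= 4 * th * (/Y) * (/l) <= 4 / l^2).
    { split. repeat apply Rmult_le_pos; lra.
      replace (4 / l^2) with (4 * 1 * (/l) * (/l)) by (field; lra).
      apply Rmult_le_compat_r. lra. apply Rmult_le_compat; try lra.
      }
    assert (E2 : 0 <= 2 * th^2 / l^2 <= 2 / l^2).
    { split. apply Rmult_le_pos. nra. left; apply Rinv_0_lt_compat; nra.
      unfold Rdiv. apply Rmult_le_compat_r. left; apply Rinv_0_lt_compat; nra. nra. }
    rewrite Rabs_mult, (Rabs_mult 2), (Rabs_pos_eq 2) by lra.
    replace (12 * Rabs a / l^2) with (2 * Rabs a * (6 / l^2)) by (field; lra).
    apply Rmult_le_compat_l. pose proof (Rabs_pos a); lra.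
    assert (6 / l^2 = 4/l^2 + 2/l^2) by (field; lra).
    split_Rabs; lra. }
  set (g := 2 * a * (4 * x ^ 2 / (Y ^ 2 * l) - 2 * x ^ 4 / (Y ^ 2 * l ^ 2))) in *.
  assert (Hq0 : 0 < q) by lra.
  assert (HG : Rabs (g / q^2) <= 48 * Rabs a / (p-1)^2 / l^2).
  { unfold Rdiv at 1. rewrite Rabs_mult, Rabs_Rinv, (Rabs_pos_eq (q^2)) by nra.
    replace (48 * Rabs a / (p-1)^2 / l^2) with ((12 * Rabs a / l^2) * (4 / (p-1)^2)) by (field; lra).
    apply Rmult_le_compat. apply Rabs_pos. left; apply Rinv_0_lt_compat; nra. auto.
    replace (4 / (p-1)^2) with (/ (((p-1)/2)^2)) by (field; lra).
    apply Rinv_le_contravar. nra. nra. }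
  set (G := g / q^2) in *.
  assert (HKdef : K = 96 * Rabs a / (p-1)^2 + 1) by reflexivity.
  set (c := 48 * Rabs a / (p-1)^2) in *.
  assert (Hc : 0 <= c) by (unfold c; apply Rmult_le_pos; [pose proof (Rabs_pos a); lra| left; apply Rinv_0_lt_compat; nra]).
  assert (HKc : 2 * c + 1 <= K) by (rewrite HKdef; unfold c; lra).
  assert (Hil2 : 0 < / l^2) by (apply Rinv_0_lt_compat; nra).
  assert (HG2 : Rabs G <= c * / l^2) by exact HG.
  assert (Ku : K / l^2 = K * / l^2) by reflexivity.
  assert (T3 : 0 <= 4 * K * th / (q * l^3)).
  { unfold Rdiv. apply Rmult_le_pos. apply Rmult_le_pos; lra.
    left; apply Rinv_0_lt_compat. apply Rmult_lt_0_compat; [lra|nra]. }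
  assert (E : forall k, (1 + k / l^2) * g / q^2 = (1 + k / l^2) * G) by (intros; unfold G, Rdiv; ring).
  rewrite !E.
  replace (4 * - K * th / (q * l ^ 3)) with (- (4 * K * th / (q * l ^ 3))) by (unfold Rdiv; ring).
  assert (HM : 0 <= K * / l^2 <= 1/2) by (split; [apply Rmult_le_pos; lra| rewrite <- Ku; lra]).
  assert (HGb := proj1 (Rabs_le_between _ _) HG2).
  unfold Rdiv in *.
  split.
  - assert (-(1 + K * / l^2) * G <= 3/2 * (c * / l^2)).
    { destruct (Rle_dec 0 G). nra. nra. }
    nra.
  - assert ((1 + - K * / l^2) * G <= c * / l^2).
    { destruct (Rle_dec 0 G). nra. nra. }
    nra.
Qed.


Lemma Phi_deriv p a k x : 1 < x -> p - 1 + 2*a*(x^2/(x^2+2))/ln (x^2+2) <> 0 ->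
  is_derive (Phi p a k) x (exp ((1-p)*ln x - a*ln (ln (x^2+2))) / x * Dk p a k x).
Proof.
  intros Hx Hq.
  assert (HY : 0 < x^2+2) by nra.
  assert (Hl : 0 < ln (x^2+2)).
  { rewrite <- ln_1. apply ln_increasing; nra. }
  unfold Phi. auto_derive.
  - replace (x*(x*1)) with (x^2) by ring. unfold Rdiv in Hq. repeat split; try lra; try exact Hq; nra.
  - replace (x*(x*1)) with (x^2) by ring.
    replace ((1 - p) * ln x + - (a * ln (ln (x ^ 2 + 2)))) with ((1-p)*ln x - a*ln (ln (x^2+2))) by ring.
    unfold Dk. cbv zeta.
    set (E := exp _). set (L := ln (x^2+2)).
    assert (HL : L <> 0) by (unfold L; lra).
    assert (Hq2 : (p - 1) * ((x ^ 2 + 2) * L) + 2 * a * x ^ 2 <> 0).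
    { replace ((p - 1) * ((x ^ 2 + 2) * L) + 2 * a * x ^ 2) with
        ((p - 1 + 2 * a * (x ^ 2 / (x ^ 2 + 2)) / L) * ((x^2+2)*L)) by (field; lra).
      apply Rmult_integral_contrapositive; split; [exact Hq| nra]. }
    field. repeat split; try lra; auto.
Qed.

Lemma comp_deriv p a k (psi : R -> R) t :
  1 < psi t -> p - 1 + 2*a*(psi t^2/(psi t^2+2))/ln (psi t^2+2) <> 0 ->
  is_derive psi t (Rpower (psi t) p * Rpower (ln (psi t ^ 2 + 2)) a) ->
  is_derive (fun t => Phi p a k (psi t) + t) t (Dk p a k (psi t) + 1).
Proof.
  intros H1 Hq Hd.
  pose proof (is_derive_comp (Phi p a k) psi t _ _ (Phi_deriv p a k (psi t) H1 Hq) Hd) as Hc.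
  pose proof (is_derive_plus _ _ t _ _ Hc (is_derive_id t)) as Hs.
  simpl in Hs.
  set (V := Dk p a k (psi t) + 1).
  match type of Hs with is_derive _ _ ?W => replace V with W; [exact Hs|] end.
  unfold V, Rpower. set (x := psi t) in *.
  assert (Hl : 0 < ln (x^2+2)).
  { rewrite <- ln_1. apply ln_increasing; nra. }
  assert (Hexp : exp (p * ln x) * exp (a * ln (ln (x ^ 2 + 2))) *
                 exp ((1 - p) * ln x - a * ln (ln (x ^ 2 + 2))) = x).
  { rewrite <- !exp_plus. replace (p * ln x + a * ln (ln (x ^ 2 + 2)) +
       ((1 - p) * ln x - a * ln (ln (x ^ 2 + 2)))) with (ln x) by ring.
    apply exp_ln; lra. }
  unfold scal, plus, one; simpl. unfold mult; simpl. unfold Rdiv.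
  replace (x*(x*1)) with (x^2) by ring.
  replace (exp (p * ln x) * exp (a * ln (ln (x ^ 2 + 2))) *
    (exp ((1 - p) * ln x - a * ln (ln (x ^ 2 + 2))) * / x * Dk p a k x))
    with (exp (p * ln x) * exp (a * ln (ln (x ^ 2 + 2))) *
    exp ((1 - p) * ln x - a * ln (ln (x ^ 2 + 2))) * / x * Dk p a k x) by ring.
  rewrite Hexp. field. lra.
Qed.

Lemma mono_nonincr (k dk : R -> R) a b :
  (forall t, a < t < b -> is_derive k t (dk t)) -> (forall t, a < t < b -> dk t <= 0) ->
  forall t1 t2, a < t1 -> t1 <= t2 -> t2 < b -> k t2 <= k t1.
Proof.
  intros Hd Hn t1 t2 H1 H2 H3.
  destruct (MVT_gen k t1 t2 dk) as [c [Hc Heq]].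
  - intros x Hx. unfold Rmin, Rmax in Hx. destruct (Rle_dec t1 t2); try lra. apply Hd; lra.
  - intros x Hx. unfold Rmin, Rmax in Hx. destruct (Rle_dec t1 t2); try lra.
    apply derive_cont with (dk x). apply Hd; lra.
  - unfold Rmin, Rmax in Hc. destruct (Rle_dec t1 t2); try lra.
    assert (dk c <= 0) by (apply Hn; lra). nra.
Qed.

Definition Ef (p a x : R) := exp ((1-p)*ln x - a*ln (ln (x^2+2))).

Lemma E_small p a eps : 1 < p -> 0 < eps -> exists X, 3 <= X /\ forall x, X <= x -> Ef p a x < eps.
Proof.
  intros Hp He.
  set (c := 6 * Rabs a / (p-1) + 1).
  assert (Hc0 : 0 <= 6 * Rabs a / (p-1)).
  { apply Rmult_le_pos. pose proof (Rabs_pos a); lra. left; apply Rinv_0_lt_compat; lra. }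
  assert (Hc : 1 <= c) by (unfold c; lra).
  assert (Hlc : 0 <= ln c) by (rewrite <- ln_1; apply ln_le; lra).
  set (Y0 := 2 * (Rabs a * ln c - ln eps) / (p-1)).
  exists (Rmax 3 (exp Y0 + 1)). split. apply Rmax_l.
  intros x Hx.
  assert (Hx3 : 3 <= x) by (pose proof (Rmax_l 3 (exp Y0 + 1)); lra).
  assert (HxY : exp Y0 < x) by (pose proof (Rmax_r 3 (exp Y0 + 1)); lra).
  assert (Hy : Y0 < ln x) by (rewrite <- (ln_exp Y0); apply ln_increasing; auto; apply exp_pos).
  set (y := ln x) in *. set (l := ln (x^2+2)).
  assert (Hl3 : l <= 3 * y).
  { assert (l <= ln (3 * x^2)) by (apply ln_le; nra).
    rewrite ln_mult in H by nra.
    assert (ln (x^2) = 2 * y) by (unfold y; rewrite ln_pow by lra; simpl INR; ring).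
    assert (ln 3 <= y) by (apply ln_le; lra). lra. }
  assert (Hl1 : 1 <= l).
  { unfold l. rewrite <- (ln_exp 1). apply ln_le. apply exp_pos.
    pose proof exp_le_3. nra. }
  assert (Hll : 0 <= ln l) by (rewrite <- ln_1; apply ln_le; lra).
  assert (Hlnl : ln l <= ln c + l / c - 1).
  { assert (Hic : 0 < / c) by (apply Rinv_0_lt_compat; lra).
    assert (Hlc2 : 0 < l * / c) by (apply Rmult_lt_0_compat; lra).
    pose proof (ln_le_self (l / c) Hlc2).
    unfold Rdiv in *. rewrite ln_mult, ln_Rinv in H by lra. lra. }
  assert (Hac : 3 * Rabs a / c <= (p-1)/2).
  { apply Rmult_le_reg_r with c. lra. unfold Rdiv. rewrite Rmult_assoc, Rinv_l by lra.
    unfold c. assert (6 * Rabs a / (p-1) * (p-1) = 6 * Rabs a) by (field; lra). nra. }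
  assert (Hal : - a * ln l <= Rabs a * ln c + (p-1)/2 * y).
  { assert (-a * ln l <= Rabs a * ln l) by (apply Rmult_le_compat_r; auto; split_Rabs; lra).
    assert (Rabs a * ln l <= Rabs a * (ln c + l / c)).
    { apply Rmult_le_compat_l. apply Rabs_pos. lra. }
    assert (Rabs a * (l / c) <= (p-1)/2 * y).
    { apply Rle_trans with (3 * Rabs a / c * y).
      - unfold Rdiv. replace (3 * Rabs a * / c * y) with (Rabs a * (3 * y * / c)) by ring.
        apply Rmult_le_compat_l. apply Rabs_pos.
        apply Rmult_le_compat_r; [left; apply Rinv_0_lt_compat; lra | lra].
      - apply Rmult_le_compat_r; [|lra]. assert (0 <= Y0 \/ Y0 < 0) by lra.
        assert (0 <= y) by (unfold y; rewrite <- ln_1; apply ln_le; lra). lra. }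
    nra. }
  unfold Ef. rewrite <- (exp_ln eps) by lra. apply exp_increasing. fold y l.
  assert (Y0 * (p-1) = 2 * (Rabs a * ln c - ln eps)) by (unfold Y0; field; lra).
  nra.
Qed.


Lemma Phi_facts p a x : 1 < p -> 1 <= x -> l0 p a <= ln (x^2+2) ->
  0 < Phi p a (Kc p a) x /\ Phi p a (- Kc p a) x <= 2 / (p-1) * Ef p a x
  /\ p - 1 + 2*a*(x^2/(x^2+2))/ln (x^2+2) <> 0.
Proof.
  intros Hp Hx Hl.
  destruct (basic_bounds p a Hp x Hx Hl) as (H1 & H2 & HK2 & Hq1 & Hq2 & Hb).
  pose proof (Kc_pos p a Hp) as HK.
  change (Phi p a (Kc p a) x) with (Ef p a x * (1 + Kc p a / (ln (x^2+2))^2) /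
   (p - 1 + 2*a*(x^2/(x^2+2))/ln (x^2+2))).
  change (Phi p a (- Kc p a) x) with (Ef p a x * (1 + - Kc p a / (ln (x^2+2))^2) /
   (p - 1 + 2*a*(x^2/(x^2+2))/ln (x^2+2))).
  set (q := p - 1 + 2*a*(x^2/(x^2+2))/ln (x^2+2)) in *.
  set (l := ln (x^2+2)) in *.
  assert (HE : 0 < Ef p a x) by apply exp_pos.
  assert (HKl : 0 <= Kc p a / l^2).
  { apply Rmult_le_pos. lra. left; apply Rinv_0_lt_compat; nra. }
  assert (Hm : - Kc p a / l^2 = - (Kc p a / l^2)) by (unfold Rdiv; ring).
  rewrite Hm.
  split; [|split].
  - apply Rmult_lt_0_compat. apply Rmult_lt_0_compat; lra. apply Rinv_0_lt_compat; lra.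
  - unfold Rdiv. apply Rle_trans with (Ef p a x * / q).
    + rewrite <- (Rmult_1_r (Ef p a x)) at 2. apply Rmult_le_compat_r.
      left; apply Rinv_0_lt_compat; lra. apply Rmult_le_compat_l; lra.
    + rewrite Rmult_comm. apply Rmult_le_compat_r. lra.
      replace (2 * / (p-1)) with (/ ((p-1)/2)) by (field; lra).
      apply Rinv_le_contravar; lra.
  - lra.
Qed.

Lemma compare (p a T : R) (psi : R -> R) (delta : R) :
  1 < p ->
  (forall t, t < T -> is_derive psi t (Rpower (psi t) p * Rpower (ln (psi t ^ 2 + 2)) a)) ->
  0 < delta ->
  (forall t, T - delta < t < T -> 1 < psi t /\ l0 p a <= ln (psi t ^ 2 + 2)) ->
  (forall M, exists eta, 0 < eta /\ forall t, T - eta < t < T -> M < psi t) ->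
  forall t, T - delta < t < T ->
    Phi p a (- Kc p a) (psi t) <= T - t <= Phi p a (Kc p a) (psi t).
Proof.
  intros Hp Hd Hdel Hbig Hlim t0 Ht0.
  assert (Hder : forall k t, T - delta < t < T ->
     is_derive (fun t => Phi p a k (psi t) + t) t (Dk p a k (psi t) + 1)).
  { intros k t Ht. destruct (Hbig t Ht) as [H1 H2].
    apply comp_deriv; auto.
    - apply (Phi_facts p a (psi t) Hp); lra.
    - apply Hd; lra. }
  split.
  - destruct (Rle_dec (Phi p a (- Kc p a) (psi t0)) (T - t0)) as [Hle|Hgt]; auto.
    exfalso. apply Rnot_le_lt in Hgt.
    set (d := Phi p a (- Kc p a) (psi t0) + t0 - T).
    assert (Hd0 : 0 < d) by (unfold d; lra).
    destruct (E_small p a (d * (p-1) / 2) Hp) as [X [HX3 HX]].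
    { apply Rmult_lt_0_compat. apply Rmult_lt_0_compat; lra. lra. }
    destruct (Hlim X) as [eta [Heta Hpsi]].
    set (t1 := (Rmax t0 (T - eta) + T) / 2).
    assert (Ht1 : t0 <= t1 /\ T - eta < t1 < T).
    { unfold t1. pose proof (Rmax_l t0 (T - eta)). pose proof (Rmax_r t0 (T - eta)).
      destruct (Rle_dec t0 (T - eta)); [rewrite Rmax_right by lra| rewrite Rmax_left by lra]; lra. }
    assert (Hmono : - (Phi p a (- Kc p a) (psi t1) + t1) <= - (Phi p a (- Kc p a) (psi t0) + t0)).
    { apply (mono_nonincr (fun t => - (Phi p a (- Kc p a) (psi t) + t))
               (fun t => - (Dk p a (- Kc p a) (psi t) + 1)) (T - delta) T); try lra.
      - intros t Ht. apply (is_derive_opp (fun t => Phi p a (- Kc p a) (psi t) + t)).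
        apply Hder; auto.
      - intros t Ht. destruct (Hbig t Ht) as [H1 H2].
        destruct (Dk_bounds p a Hp (psi t) ltac:(lra) H2) as [_ HD]; lra. }
    assert (HX1 : X < psi t1) by (apply Hpsi; lra).
    assert (HE : Ef p a (psi t1) < d * (p-1) / 2) by (apply HX; lra).
    destruct (Hbig t1) as [H1 H2]; [lra|].
    destruct (Phi_facts p a (psi t1) Hp) as [_ [HP _]]; try lra.
    assert (2 / (p-1) * Ef p a (psi t1) < d).
    { replace d with (2 / (p-1) * (d * (p-1) / 2)) by (field; lra).
      apply Rmult_lt_compat_l; auto. apply Rmult_lt_0_compat; try lra. apply Rinv_0_lt_compat; lra. }
    unfold d in *. lra.
  - destruct (Rle_dec (T - t0) (Phi p a (Kc p a) (psi t0))) as [Hle|Hgt]; auto.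
    exfalso. apply Rnot_le_lt in Hgt.
    set (m := Phi p a (Kc p a) (psi t0) + t0).
    set (t1 := (Rmax t0 m + T) / 2).
    assert (Ht1 : t0 <= t1 < T /\ m < t1).
    { unfold t1. pose proof (Rmax_l t0 m). pose proof (Rmax_r t0 m).
      destruct (Rle_dec t0 m); [rewrite Rmax_right by lra| rewrite Rmax_left by lra]; unfold m in *; lra. }
    assert (Hmono : Phi p a (Kc p a) (psi t1) + t1 <= m).
    { apply (mono_nonincr (fun t => Phi p a (Kc p a) (psi t) + t)
               (fun t => Dk p a (Kc p a) (psi t) + 1) (T - delta) T); try lra.
      - intros t Ht. apply Hder; auto.
      - intros t Ht. destruct (Hbig t Ht) as [H1 H2].
        destruct (Dk_bounds p a Hp (psi t) ltac:(lra) H2) as [HD _]; lra. }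
    destruct (Hbig t1) as [H1 H2]; [lra|].
    destruct (Phi_facts p a (psi t1) Hp) as [HP _]; try lra.
Qed.


Lemma abs_mul_le x y X Y : Rabs x <= X -> Rabs y <= Y -> Rabs (x * y) <= X * Y.
Proof.
  intros H1 H2. rewrite Rabs_mult. apply Rmult_le_compat; auto; apply Rabs_pos.
Qed.

Lemma pw_P p w : Rabs w <= 1/2 -> Rpower (Rabs (w+1)) (p-1) * (w+1) = pw p w.
Proof.
  intros Hw. unfold Rpower, pw. rewrite Rabs_pos_eq by (split_Rabs; lra).
  rewrite (Rplus_comm w 1).
  rewrite <- (exp_ln (1+w)) at 2 by (split_Rabs; lra).
  rewrite <- exp_plus. f_equal. ring.
Qed.

Lemma alg_id (N h p a l th w P R L1 : R) : l <> 0 ->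
  N = h * P * R - h * (w + 1) - w ->
  let beta := 2 * a * th / l in
  let u := h * (p - 1 + beta) - 1 in
  let aa := p * (p-1) / 2 in
  let tau := P - 1 - p * w - aa * w^2 in
  let eps := L1 / l in
  let r1 := R - 1 - a * eps in
  let r2 := L1 - th * (2*w + w^2) in
  N - p * w^2 / 2 = u * w + (p/2) * (u - h * beta) * w^2 +
     h * (p * beta * w^2 + aa * beta * w^3 + tau * (1 + beta * w) +
          P * (beta * w^2 / 2 + a * r2 / l + r1)).
Proof.
  intros Hl HN. cbv zeta. subst N. field. auto.
Qed.

Lemma w_bound p a : 1 < p -> exists C, 0 < C /\ forall x h w,
  1 <= x -> l0 p a <= ln (x^2+2) -> 0 < h ->
  Rabs (h * (p - 1 + 2*a*(x^2/(x^2+2))/ln (x^2+2)) - 1) <= Kc p a / (ln (x^2+2))^2 ->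
  Rabs w <= 1/8 ->
  Rabs (h * Rpower (Rabs (w + 1)) (p - 1) * (w + 1) *
     (Rpower (ln (x ^ 2 * (w + 1) ^ 2 + 2)) a / Rpower (ln (x^2+2)) a) - h * (w + 1) - w
     - p * w^2/2)
  <= C * (Rabs w / (ln (x^2+2))^2 + Rabs w ^ 2 / ln (x^2+2) + Rabs w ^ 3).
Proof.
  intros Hp.
  destruct (pw_bound0 p) as [A0 [HA0 HP0]].
  destruct (pw_T2 a) as [A2 [HA2 HP2]].
  destruct (pw_T3 p) as [A3 [HA3 HP3]].
  pose proof (Kc_pos p a Hp) as HK.
  set (K := Kc p a) in *.
  set (Q := 1 + K + 3/(p-1) + 2 * Rabs a + A0 + A2 + A3 + p + Rabs (p*(p-1)/2) + Rabs a).
  assert (Hp1 : 0 < 3/(p-1)) by (apply Rmult_lt_0_compat; [lra| apply Rinv_0_lt_compat; lra]).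
  pose proof (Rabs_pos a) as Ha. pose proof (Rabs_pos (p*(p-1)/2)) as Haa.
  assert (HQ1 : 1 <= Q) by (unfold Q; lra).
  exists (100 * Q^3). split. nra.
  intros x h w Hx Hl Hh Hu Hw.
  destruct (basic_bounds p a Hp x Hx Hl) as (H1 & H2 & HK2 & Hq1 & Hq2 & Hb).
  fold K in HK2, Hu.
  set (l := ln (x^2+2)) in *. set (th := x^2/(x^2+2)) in *.
  assert (Hl3 : 3 <= l).
  { unfold l0 in Hl. fold K in Hl.
    assert (0 <= 4 * Rabs a / (p-1)) by (apply Rmult_le_pos; [lra| left; apply Rinv_0_lt_compat; lra]).
    lra. }
  assert (Hth : 0 <= th <= 1).
  { split. unfold th. apply Rmult_le_pos. nra. left; apply Rinv_0_lt_compat; nra.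
    apply Rmult_le_reg_r with (x^2+2). nra. unfold th, Rdiv.
    rewrite Rmult_assoc, Rinv_l by nra. nra. }
  set (q := p - 1 + 2 * a * th / l) in *.
  assert (Hhb : h <= Q).
  { assert (h * q <= 3/2) by (apply Rabs_le_between in Hu; lra).
    assert (h * ((p-1)/2) <= 3/2) by nra.
    assert (h <= 3/(p-1)).
    { apply Rmult_le_reg_r with ((p-1)/2). lra.
      replace (3 / (p-1) * ((p-1)/2)) with (3/2) by (field; lra). lra. }
    unfold Q. lra. }
  assert (Hw2 : Rabs w <= 1/2) by lra.
  rewrite (Rmult_assoc h (Rpower _ _) (w+1)), (pw_P p w Hw2).
  set (v := 2 * w + w^2).
  set (y := th * v).
  assert (Hv : Rabs v <= 3 * Rabs w).
  { unfold v. replace (2 * w + w^2) with (w * (2 + w)) by ring. rewrite Rabs_mult.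
    rewrite (Rmult_comm 3). apply Rmult_le_compat_l. apply Rabs_pos. split_Rabs; lra. }
  assert (Hy : Rabs y <= 3 * Rabs w).
  { unfold y. rewrite Rabs_mult, Rabs_pos_eq by lra.
    assert (0 <= Rabs v) by apply Rabs_pos. nra. }
  assert (Hy2 : Rabs y <= 1/2) by lra.
  assert (Hfac : x ^ 2 * (w + 1) ^ 2 + 2 = (x^2+2) * (1 + y)).
  { unfold y, v, th. field. nra. }
  assert (H1y : 0 < 1 + y) by (split_Rabs; lra).
  set (L1 := ln (1 + y)).
  assert (HLw : ln (x ^ 2 * (w + 1) ^ 2 + 2) = l + L1).
  { rewrite Hfac, ln_mult by nra. reflexivity. }
  assert (HL1 : Rabs L1 <= 6 * Rabs w) by (pose proof (ln_T1 y Hy2); unfold L1; lra).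
  set (eps := L1 / l).
  assert (Hil : 0 < / l) by (apply Rinv_0_lt_compat; lra).
  assert (Hil3 : / l <= 1/3).
  { replace (1/3) with (/ 3) by field. apply Rinv_le_contravar; lra. }
  assert (Heps : Rabs eps <= 6 * Rabs w * / l).
  { unfold eps, Rdiv. rewrite Rabs_mult, Rabs_pos_eq with (x := / l) by lra.
    apply Rmult_le_compat_r; lra. }
  assert (Heps2 : Rabs eps <= 1/2).
  { assert (0 <= Rabs w) by apply Rabs_pos. nra. }
  assert (HR : Rpower (l + L1) a / Rpower l a = pw a eps).
  { assert (Hll : l + L1 = l * (1 + eps)) by (unfold eps; field; lra).
    assert (H1e : 0 < 1 + eps) by (split_Rabs; lra).
    unfold Rpower, pw. rewrite Hll, ln_mult by lra.
    rewrite Rmult_plus_distr_l, exp_plus. field. apply Rgt_not_eq, exp_pos. }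
  rewrite HLw, HR.
  pose proof (alg_id (pw p w * h * pw a eps - h * (w+1) - w - 0) h p a l th w (pw p w) (pw a eps) L1
     ltac:(lra) ltac:(ring)) as Hid.
  cbv zeta in Hid.
  replace (h * pw p w * pw a eps - h * (w + 1) - w - p * w ^ 2 / 2)
    with (pw p w * h * pw a eps - h * (w + 1) - w - 0 - p * w ^ 2 / 2) by ring.
  rewrite Hid. fold eps. fold q.
  replace (h * (p - 1 + 2 * a * th / l) - 1) with (h * q - 1) by reflexivity.
  set (u := h * q - 1) in *.
  set (beta := 2 * a * th / l) in *.
  set (tau := pw p w - 1 - p * w - p * (p - 1) / 2 * w ^ 2).
  set (r1 := pw a eps - 1 - a * eps).
  set (r2 := L1 - th * (2 * w + w ^ 2)).
  set (P := pw p w).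
  set (W := Rabs w) in *. set (il := / l) in *.
  assert (HW : 0 <= W) by apply Rabs_pos.
  assert (Hil1 : il <= 1) by lra.
  assert (Htau : Rabs tau <= Q * W^3).
  { apply Rle_trans with (A3 * W^3). apply HP3; auto.
    apply Rmult_le_compat_r. apply pow_le; lra. unfold Q; lra. }
  assert (Hr1 : Rabs r1 <= 36 * Q * (W^2 * il)).
  { apply Rle_trans with (A2 * Rabs eps ^ 2). apply HP2; auto.
    assert (Rabs eps ^ 2 <= 36 * W^2 * il^2).
    { assert (0 <= Rabs eps) by apply Rabs_pos. apply Rle_trans with ((6 * W * il)^2). apply pow_incr; lra. right; ring. }
    assert (A2 <= Q) by (unfold Q; lra).
    assert (il^2 <= il) by nra.
    assert (0 <= W^2) by nra.
    assert (0 <= Rabs eps ^ 2) by (apply pow_le; apply Rabs_pos).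
    apply Rle_trans with (Q * (36 * W^2 * il^2)). apply Rmult_le_compat; lra.
    replace (Q * (36 * W^2 * il^2)) with ((36 * Q * W^2) * il^2) by ring. replace (36 * Q * (W^2 * il)) with ((36 * Q * W^2) * il) by ring. apply Rmult_le_compat_l; [nra|lra]. }
  assert (Hr2 : Rabs r2 <= 18 * W^2).
  { unfold r2. fold v y. pose proof (ln_T2 y Hy2). unfold L1.
    assert (Rabs y ^ 2 <= 9 * W^2).
    { assert (0 <= Rabs y) by apply Rabs_pos. apply Rle_trans with ((3 * W)^2). apply pow_incr; lra. right; ring. }
    lra. }
  assert (HPb : Rabs P <= Q) by (apply Rle_trans with A0; [apply HP0; auto| unfold Q; lra]).
  assert (Hbeta : Rabs beta <= Q * il).
  { apply Rle_trans with (2 * Rabs a / l). exact Hb. unfold Rdiv. fold il.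
    apply Rmult_le_compat_r. lra. unfold Q; lra. }
  assert (Hu2 : Rabs u <= Q * il^2).
  { apply Rle_trans with (K / l^2). exact Hu. unfold Rdiv.
    replace (/ l^2) with (il^2) by (unfold il; field; lra).
    apply Rmult_le_compat_r. nra. unfold Q; lra. }
  assert (Hpq : Rabs p <= Q) by (rewrite Rabs_pos_eq by lra; unfold Q; lra).
  assert (HpQ : p <= Q) by (unfold Q; lra).
  assert (Haq : Rabs a <= Q) by (unfold Q; lra).
  assert (Haaq : Rabs (p * (p-1)/2) <= Q) by (unfold Q; lra).
  assert (HW8 : W <= 1/8) by exact Hw.
  replace (Rabs w / l^2) with (W * il^2) by (unfold W, il; field; lra).
  replace (Rabs w ^ 2 / l) with (W^2 * il) by (unfold W, il; field; lra).
  fold W.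
  set (Z1 := W * il^2). set (Z2 := W^2 * il). set (Z3 := W^3).
  assert (HZ1 : 0 <= Z1) by (unfold Z1; nra).
  assert (HZ2 : 0 <= Z2) by (unfold Z2; nra).
  assert (HZ3 : 0 <= Z3) by (unfold Z3; nra).
  assert (HQ3 : Q <= Q^3) by nra.
  assert (HQ2 : Q^2 <= Q^3) by nra.
  assert (T1 : Rabs (u * w) <= Q * Z1).
  { apply Rle_trans with (Q * il^2 * W). apply abs_mul_le; auto. unfold W; lra. right; unfold Z1; ring. }
  assert (T2 : Rabs (p / 2 * (u - h * beta) * w ^ 2) <= Q^3 * Z2).
  { assert (Rabs (u - h*beta) <= Q * il + Q * Q * il).
    { assert (Rabs (h * beta) <= Q * (Q * il)).
      { apply abs_mul_le; auto. rewrite Rabs_pos_eq; lra. }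
      assert (Q * il^2 <= Q * il) by (assert (il^2 <= il) by nra; apply Rmult_le_compat_l; lra).
      pose proof (Rabs_triang u (- (h*beta))) as Htr. rewrite Rabs_Ropp in Htr.
      unfold Rminus. lra. }
    replace (p / 2 * (u - h * beta) * w ^ 2) with ((p/2) * ((u - h*beta) * w^2)) by ring.
    apply Rle_trans with (Q / 2 * ((Q*il + Q*Q*il) * W^2)).
    { apply abs_mul_le. rewrite Rabs_pos_eq by lra. lra.
      apply abs_mul_le; auto. rewrite <- RPow_abs. right; reflexivity. }
    replace (Q / 2 * ((Q*il + Q*Q*il) * W^2)) with ((Q * Q + Q * Q * Q) / 2 * Z2) by (unfold Z2; field).
    apply Rmult_le_compat_r; auto. nra. }
  assert (X1 : Rabs (p * beta * w^2) <= Q^2 * Z2).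
  { rewrite Rabs_mult. replace (Rabs (w^2)) with (W^2) by (unfold W; rewrite <- RPow_abs; reflexivity).
    apply Rle_trans with (Q * (Q * il) * W^2).
    apply Rmult_le_compat_r. nra. apply abs_mul_le; auto.
    unfold Z2. nra. }
  assert (X2 : Rabs (p * (p - 1) / 2 * beta * w ^ 3) <= Q^2 * Z3).
  { rewrite Rabs_mult. replace (Rabs (w^3)) with (W^3) by (unfold W; rewrite <- RPow_abs; reflexivity).
    apply Rle_trans with (Q * (Q * il) * W^3).
    apply Rmult_le_compat_r. nra. apply abs_mul_le; auto.
    replace (Q*(Q*il)*W^3) with ((Q*Q*W^3)*il) by ring. replace (Q^2*Z3) with ((Q*Q*W^3)*1) by (unfold Z3; ring). assert (0 <= W^3) by nra. apply Rmult_le_compat_l; [nra|lra]. }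
  assert (X3 : Rabs (tau * (1 + beta * w)) <= 2 * Q^2 * Z3).
  { assert (Rabs (1 + beta * w) <= 2 * Q).
    { pose proof (Rabs_triang 1 (beta * w)). rewrite Rabs_R1 in H.
      assert (Rabs (beta * w) <= Q * il * W) by (apply abs_mul_le; auto; unfold W; lra).
      assert (Q * il * W <= Q) by (assert (il * W <= 1) by nra; replace (Q*il*W) with (Q*(il*W)) by ring; rewrite <- (Rmult_1_r Q) at 2; apply Rmult_le_compat_l; lra). lra. }
    apply Rle_trans with (Q * W^3 * (2 * Q)). apply abs_mul_le; auto.
    unfold Z3. assert (0 <= W^3) by nra. nra. }
  assert (X4 : Rabs (P * (beta * w ^ 2 / 2 + a * r2 / l + r1)) <= 55 * Q^2 * Z2).
  { assert (Rabs (beta * w ^ 2 / 2 + a * r2 / l + r1) <= 55 * Q * Z2).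
    { assert (E1 : Rabs (beta * w^2 / 2) <= Q * Z2).
      { unfold Rdiv. rewrite !Rabs_mult. rewrite (Rabs_pos_eq (/2)) by lra.
        replace (Rabs (w^2)) with (W^2) by (unfold W; rewrite <- RPow_abs; reflexivity).
        assert (Rabs beta * W^2 <= Q * il * W^2) by (apply Rmult_le_compat_r; nra).
        assert (0 <= Rabs beta * W^2) by (apply Rmult_le_pos; [apply Rabs_pos|nra]). unfold Z2. lra. }
      assert (E2 : Rabs (a * r2 / l) <= 18 * Q * Z2).
      { unfold Rdiv. fold il. rewrite !Rabs_mult. rewrite (Rabs_pos_eq il) by lra.
        assert (Rabs a * Rabs r2 <= Q * (18 * W^2)) by (apply Rmult_le_compat; auto; apply Rabs_pos).
        unfold Z2. nra. }
      pose proof (Rabs_triang (beta * w ^ 2 / 2 + a * r2 / l) r1).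
      pose proof (Rabs_triang (beta * w ^ 2 / 2) (a * r2 / l)).
      unfold Z2 in *. lra. }
    apply Rle_trans with (Q * (55 * Q * Z2)). apply abs_mul_le; auto. nra. }
  assert (T3 : Rabs (h * (p * beta * w ^ 2 + p * (p - 1) / 2 * beta * w ^ 3 + tau * (1 + beta * w) +
      P * (beta * w ^ 2 / 2 + a * r2 / l + r1))) <= 56 * Q^3 * Z2 + 3 * Q^3 * Z3).
  { rewrite Rabs_mult, (Rabs_pos_eq h) by lra.
    set (X := p * beta * w ^ 2 + p * (p - 1) / 2 * beta * w ^ 3 + tau * (1 + beta * w) +
      P * (beta * w ^ 2 / 2 + a * r2 / l + r1)).
    assert (Rabs X <= 56 * Q^2 * Z2 + 3 * Q^2 * Z3).
    { unfold X.
      pose proof (Rabs_triang (p * beta * w ^ 2 + p * (p - 1) / 2 * beta * w ^ 3 + tau * (1 + beta * w))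
                   (P * (beta * w ^ 2 / 2 + a * r2 / l + r1))).
      pose proof (Rabs_triang (p * beta * w ^ 2 + p * (p - 1) / 2 * beta * w ^ 3) (tau * (1 + beta * w))).
      pose proof (Rabs_triang (p * beta * w ^ 2) (p * (p - 1) / 2 * beta * w ^ 3)).
      nra. }
    apply Rle_trans with (Q * (56 * Q^2 * Z2 + 3 * Q^2 * Z3)).
    apply Rmult_le_compat; try lra; apply Rabs_pos.
    nra. }
  pose proof (Rabs_triang (u * w + p / 2 * (u - h * beta) * w ^ 2)
     (h * (p * beta * w ^ 2 + p * (p - 1) / 2 * beta * w ^ 3 + tau * (1 + beta * w) +
      P * (beta * w ^ 2 / 2 + a * r2 / l + r1)))).
  pose proof (Rabs_triang (u * w) (p / 2 * (u - h * beta) * w ^ 2)).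
  assert (Q * Z1 <= Q^3 * Z1) by nra.
  assert (0 <= Q^3 * Z1) by (apply Rmult_le_pos; nra).
  assert (0 <= Q^3 * Z2) by (apply Rmult_le_pos; nra).
  assert (0 <= Q^3 * Z3) by (apply Rmult_le_pos; nra).
  replace (W / l^2) with Z1 by (unfold Z1, il; field; lra).
  replace (W^2 / l) with Z2 by (unfold Z2, il; field; lra).
  lra.
Qed.


Lemma h_facts p a x e s : 1 < p -> 1 <= x -> l0 p a <= ln (x^2+2) ->
  Phi p a (- Kc p a) x <= e <= Phi p a (Kc p a) x -> e = exp (- s) ->
  0 < e * Rpower x (p-1) * Rpower (ln (x^2+2)) a /\
  Rabs (e * Rpower x (p-1) * Rpower (ln (x^2+2)) a *
        (p - 1 + 2*a*(x^2/(x^2+2))/ln (x^2+2)) - 1) <= Kc p a / (ln (x^2+2))^2 /\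
  s <= ((p-1)/2 + Rabs a) * ln (x^2+2) + Rabs (ln (3 * (p-1))).
Proof.
  intros Hp Hx Hl [Hlo Hhi] He.
  destruct (basic_bounds p a Hp x Hx Hl) as (H1 & H2 & HK2 & Hq1 & Hq2 & Hb).
  pose proof (Kc_pos p a Hp) as HK.
  change (Phi p a (Kc p a) x) with (Ef p a x * (1 + Kc p a / (ln (x^2+2))^2) /
   (p - 1 + 2*a*(x^2/(x^2+2))/ln (x^2+2))) in Hhi.
  change (Phi p a (- Kc p a) x) with (Ef p a x * (1 + - Kc p a / (ln (x^2+2))^2) /
   (p - 1 + 2*a*(x^2/(x^2+2))/ln (x^2+2))) in Hlo.
  set (q := p - 1 + 2*a*(x^2/(x^2+2))/ln (x^2+2)) in *.
  set (l := ln (x^2+2)) in *.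
  set (K := Kc p a) in *.
  assert (HE : 0 < Ef p a x) by apply exp_pos.
  assert (Hinv : Rpower x (p-1) * Rpower l a = / Ef p a x).
  { unfold Rpower, Ef. fold l. rewrite <- exp_plus, <- exp_Ropp. f_equal. ring. }
  assert (He0 : 0 < e) by (rewrite He; apply exp_pos).
  rewrite Rmult_assoc, Hinv.
  assert (Hm : - K / l^2 = - (K / l^2)) by (unfold Rdiv; ring).
  rewrite Hm in Hlo.
  assert (Hq0 : 0 < q) by lra.
  assert (Hup : e * / Ef p a x * q <= 1 + K / l^2).
  { apply Rmult_le_reg_r with (Ef p a x * / q).
    apply Rmult_lt_0_compat; auto. apply Rinv_0_lt_compat; auto.
    replace (e * / Ef p a x * q * (Ef p a x * / q)) with e by (field; lra).
    unfold Rdiv in Hhi. lra. }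
  assert (Hdn : 1 - K / l^2 <= e * / Ef p a x * q).
  { apply Rmult_le_reg_r with (Ef p a x * / q).
    apply Rmult_lt_0_compat; auto. apply Rinv_0_lt_compat; auto.
    replace (e * / Ef p a x * q * (Ef p a x * / q)) with e by (field; lra).
    unfold Rdiv in Hlo. lra. }
  split; [|split].
  - apply Rmult_lt_0_compat; auto. apply Rinv_0_lt_compat; auto.
  - apply Rabs_le. lra.
  - assert (Hlow : Ef p a x * / (3 * (p-1)) <= e).
    { apply Rle_trans with (Ef p a x * (1 + - (K / l ^ 2)) / q); auto.
      unfold Rdiv. rewrite Rmult_assoc. apply Rmult_le_compat_l. lra.
      apply Rmult_le_reg_r with (3 * (p-1) * q). nra.
      replace (/ (3 * (p - 1)) * (3 * (p - 1) * q)) with q by (field; lra).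
      replace ((1 + - (K * / l ^ 2)) * / q * (3 * (p - 1) * q)) with ((1 + - (K / l ^ 2)) * (3 * (p-1))) by (unfold Rdiv; field; lra).
      assert (0 <= (1/2 - K/l^2) * (3*(p-1))) by (apply Rmult_le_pos; lra). lra. }
    assert (H3p : 0 < 3 * (p-1)) by lra.
    apply ln_le in Hlow; [| apply Rmult_lt_0_compat; auto; apply Rinv_0_lt_compat; auto].
    rewrite He, ln_exp, ln_mult, ln_Rinv in Hlow; auto; [| apply Rinv_0_lt_compat; auto].
    unfold Ef in Hlow. rewrite ln_exp in Hlow. fold l in Hlow.
    assert (Hlx : 2 * ln x <= l).
    { assert (ln (x^2) <= l) by (apply ln_le; nra).
      rewrite ln_pow in H by lra. simpl INR in H. lra. }
    assert (Hll0 : 0 <= ln l) by (rewrite <- ln_1; apply ln_le; lra).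
    assert (Hll : ln l <= l) by (pose proof (ln_le_self l); lra).
    assert (Hal : a * ln l <= Rabs a * l).
    { apply Rle_trans with (Rabs a * ln l).
      apply Rmult_le_compat_r; auto. apply Rle_abs.
      apply Rmult_le_compat_l; auto. apply Rabs_pos. }
    pose proof (Rle_abs (ln (3 * (p-1)))).
    assert ((p-1) * ln x <= (p-1)/2 * l) by nra.
    nra.
Qed.


Lemma lim_extract (psi : R -> R) T :
  filterlim psi (at_left T) (Rbar_locally p_infty) ->
  forall M, exists eta, 0 < eta /\ forall t, T - eta < t < T -> M < psi t.
Proof.
  intros Hlim M.
  assert (HM : Rbar_locally p_infty (fun y => M < y)) by (exists M; auto).
  specialize (Hlim _ HM).
  destruct Hlim as [eps Heps].
  exists eps. split. apply cond_pos.
  intros t Ht. apply Heps; [|lra].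
  change (Rabs (t - T) < eps). apply Rabs_lt_between'. lra.
Qed.

Theorem lemmaA6 (p alpha T : R) (psi : R -> R) :
  1 < p -> 0 < T -> is_blowup_sol p alpha T psi ->
  exists C delta S : R, 0 < C /\ 0 < delta /\
    forall w s, Rabs w < delta -> S < s ->
      Rabs (Nfun p alpha T psi w s - p * w ^ 2 / 2)
        <= C * (Rabs w * ln s / s ^ 2 + Rabs w ^ 2 / s + Rabs w ^ 3).
Proof.
  intros Hp HT [Hpos [Hder Hlim]].
  pose proof (lim_extract psi T Hlim) as Hlim'.
  set (L0 := l0 p alpha).
  destruct (Hlim' (exp L0 + 1)) as [delta [Hdel Hpsi]].
  assert (Hbig : forall t, T - delta < t < T -> 1 < psi t /\ l0 p alpha <= ln (psi t ^ 2 + 2)).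
  { intros t Ht. specialize (Hpsi t Ht). pose proof (exp_pos L0). split. lra.
    fold L0. rewrite <- (ln_exp L0). apply ln_le. apply exp_pos. nra. }
  pose proof (compare p alpha T psi delta Hp Hder Hdel Hbig Hlim') as Hcmp.
  destruct (w_bound p alpha Hp) as [C [HC Hwb]].
  set (A := (p-1)/2 + Rabs alpha).
  set (c0 := Rabs (ln (3 * (p-1)))).
  assert (HA : 0 < A) by (unfold A; pose proof (Rabs_pos alpha); lra).
  assert (Hc0 : 0 <= c0) by apply Rabs_pos.
  exists (C * (4 * A^2 + 2 * A + 1)), (1/8), (Rmax 3 (Rmax (- ln delta) (2 * c0 + 1))).
  split. apply Rmult_lt_0_compat; auto. nra. split. lra.
  intros w s Hw Hs.
  assert (Hs3 : 3 <= s) by (pose proof (Rmax_l 3 (Rmax (- ln delta) (2 * c0 + 1))); lra).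
  assert (Hsd : - ln delta < s).
  { pose proof (Rmax_r 3 (Rmax (- ln delta) (2 * c0 + 1))).
    pose proof (Rmax_l (- ln delta) (2 * c0 + 1)). lra. }
  assert (Hsc : 2 * c0 + 1 <= s).
  { pose proof (Rmax_r 3 (Rmax (- ln delta) (2 * c0 + 1))).
    pose proof (Rmax_r (- ln delta) (2 * c0 + 1)). lra. }
  set (t := T - exp (- s)).
  assert (Hes : exp (- s) < delta).
  { rewrite <- (exp_ln delta) by auto. apply exp_increasing. lra. }
  assert (Ht : T - delta < t < T) by (unfold t; pose proof (exp_pos (- s)); lra).
  destruct (Hbig t Ht) as [Hx1 Hxl].
  specialize (Hcmp t Ht).
  replace (T - t) with (exp (- s)) in Hcmp by (unfold t; ring).
  set (x := psi t) in *.
  destruct (h_facts p alpha x (exp (- s)) s Hp ltac:(lra) Hxl Hcmp eq_refl) as [Hh [Hu Hsl]].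
  fold A c0 in Hsl.
  unfold Nfun, hfun, psi1, lnpow, rpow. fold t x.
  eapply Rle_trans.
  { apply Hwb; auto; lra. }
  set (l := ln (x^2+2)) in *.
  assert (Hl1 : 1 <= l).
  { destruct (basic_bounds p alpha Hp x ltac:(lra) Hxl) as [H _]. exact H. }
  assert (Hsl2 : s <= 2 * A * l) by lra.
  assert (Hil : / l <= 2 * A / s).
  { apply Rmult_le_reg_r with (l * s). nra.
    replace (/ l * (l * s)) with s by (field; lra).
    replace (2 * A / s * (l * s)) with (2 * A * l) by (field; lra). lra. }
  assert (Hlns : 1 <= ln s).
  { rewrite <- (ln_exp 1). apply ln_le. apply exp_pos. pose proof exp_le_3. lra. }
  set (W := Rabs w).
  assert (HW : 0 <= W) by apply Rabs_pos.
  assert (Hi0 : 0 < / l) by (apply Rinv_0_lt_compat; lra).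
  assert (Hs0 : 0 < / s) by (apply Rinv_0_lt_compat; lra).
  assert (E1 : W / l^2 <= 4 * A^2 * (W * ln s / s^2)).
  { replace (W / l^2) with (W * (/ l)^2) by (field; lra).
    replace (4 * A^2 * (W * ln s / s^2)) with (W * ln s * (2 * A / s)^2) by (field; lra).
    assert ((/ l)^2 <= (2 * A / s)^2) by (apply pow_incr; lra).
    assert (0 <= (2 * A / s)^2) by nra.
    apply Rle_trans with (W * (2*A/s)^2). apply Rmult_le_compat_l; lra.
    replace (W * ln s * (2 * A / s)^2) with ((W * (2*A/s)^2) * ln s) by ring.
    rewrite <- (Rmult_1_r (W * (2*A/s)^2)) at 1. apply Rmult_le_compat_l; [nra|lra]. }
  assert (E2 : W^2 / l <= 2 * A * (W^2 / s)).
  { unfold Rdiv. replace (2 * A * (W^2 * / s)) with (W^2 * (2 * A * / s)) by ring.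
    apply Rmult_le_compat_l. nra. unfold Rdiv in Hil. lra. }
  assert (0 <= W * ln s / s^2).
  { unfold Rdiv. apply Rmult_le_pos. nra. left; apply Rinv_0_lt_compat; nra. }
  assert (0 <= W^2 / s) by (unfold Rdiv; apply Rmult_le_pos; nra).
  assert (0 <= W^3) by nra.
  replace (C * (4 * A ^ 2 + 2 * A + 1) * (W * ln s / s ^ 2 + W ^ 2 / s + W ^ 3))
    with (C * ((4 * A ^ 2 + 2 * A + 1) * (W * ln s / s ^ 2 + W ^ 2 / s + W ^ 3))) by ring.
  apply Rmult_le_compat_l. lra.
  assert (A^2 * (W * ln s / s^2) >= 0) by nra.
  assert (A * (W ^ 2 / s) >= 0) by nra.
  nra.
Qed.
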